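(* In a realisation of a local affine Gaudin model (setting below), let $\mathcal Q(z)=-\frac{1}{2\varphi(z)}\int_{\mathbb D}dx\,\kappa\big(\Gamma(z,x),\Gamma(z,x)\big)$. Then $\mathcal Q(z)=-\sum_{\alpha\in\Sigma}\sum_{p=0}^{m_\alpha-1}\frac{\mathcal D^\alpha_{[p]}}{(z-z_\alpha)^{p+1}}+\mathcal Q_{\rm reg}(z)$, where $\mathcal Q_{\rm reg}(z)$ is regular at all positions $z_\alpha$, $\alpha\in\Sigma$.
   Context: $\mathfrak g$: finite-dimensional simple complex Lie algebra, $\kappa$: minus its Killing form, $C_{12}=I_a\otimes I^a$ for dual bases w.r.t. $\kappa$; $\mathfrak g_0$: real form, fixed points of an antilinear involution $\tau$. $\mathbb D$ is $\mathbb R$ or the circle; $\delta'_{xy}=\partial_x\delta(x-y)$. Data: a finite set of sites $\Sigma=\Sigma_r\sqcup\Sigma_c\sqcup\bar\Sigma_c$ (real sites, complex sites, their conjugates $\bar\alpha$), multiplicities $m_\alpha\ge1$ ($m_{\bar\alpha}=m_\alpha$), levels $\ell^\alpha_{[p]}$, $0\le p\le m_\alpha-1$ (real for real sites, $\ell^{\bar\alpha}_{[p]}=\overline{\ell^\alpha_{[p]}}$), with $\ell^\alpha_{[m_\alpha-1]}\neq0$; pairwise distinct positions $z_\alpha$ (real for real sites, $z_{\bar\alpha}=\overline{z_\alpha}$); a real $\ell^\infty\neq0$. A realisation is a Poisson algebra $\mathcal A$ of local observables of a field theory on $\mathbb D$ containing $\mathfrak g$-valued fields $\mathcal J^\alpha_{[p]}(x)$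 with $\{\mathcal J^\alpha_{[p]}{}_1(x),\mathcal J^\beta_{[q]}{}_2(y)\}=\delta_{\alpha\beta}([C_{12},\mathcal J^\alpha_{[p+q]}{}_1(x)]\delta_{xy}-\ell^\alpha_{[p+q]}C_{12}\delta'_{xy})$ if $p+q<m_\alpha$ and $0$ otherwise, with reality conditions $\tau(\mathcal J^\alpha_{[p]})=\mathcal J^\alpha_{[p]}$ (real $\alpha$), $\tau(\mathcal J^\alpha_{[p]})=\mathcal J^{\bar\alpha}_{[p]}$ (complex $\alpha$). Twist function $\varphi(z)=\sum_{\alpha\in\Sigma}\sum_{p=0}^{m_\alpha-1}\frac{\ell^\alpha_{[p]}}{(z-z_\alpha)^{p+1}}-\ell^\infty$; Gaudin Lax matrix $\Gamma(z,x)=\sum_\alpha\sum_p\frac{\mathcal J^\alpha_{[p]}(x)}{(z-z_\alpha)^{p+1}}$. For each $\alpha$, $\eta^\alpha_{[p]}$ ($0\le p\le 2m_\alpha-2$) denotes the unique solution of $\sum_{p=0}^{m_\alpha-1-r}\eta^\alpha_{[p+q]}\ell^\alpha_{[p+r]}=\delta_{q,r}$ for all $q,r\in\{0,\dots,m_\alpha-1\}$, and $\mathcal D^\alpha_{[p]}=\frac12\sum_{q,r=0,\,q+r\ge p}^{m_\alpha-1}\eta^\alpha_{[q+r-p]}\int_{\mathbb D}dx\,\kappa(\mathcal J^\alpha_{[q]}(x),\mathcal J^\alpha_{[r]}(x))$. *)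

(* Defs.v *)
From mathcomp Require Import all_boot all_order all_algebra.
From mathcomp Require Import complex Rstruct.
Set Implicit Arguments. Unset Strict Implicit. Unset Printing Implicit Defensive.
Import Order.TTheory GRing.Theory Num.Theory.
Local Open Scope ring_scope.

Definition C : numClosedFieldType := Rdefinitions.R[i].

Section Gaudin.
Variables (Sigma : finType) (m : Sigma -> nat) (ell : Sigma -> nat -> C)
  (zs : Sigma -> C) (ellinf : C).

Definition twist (w : C) : C :=
  \sum_(a : Sigma) \sum_(p < m a) ell a p / (w - zs a) ^+ p.+1 - ellinf.

Definition off_sites (w : C) : Prop := forall a : Sigma, w != zs a.

Definition eta_spec (eta : Sigma -> nat -> C) : Prop :=
  forall (a : Sigma) (q r : nat), (q < m a)%N -> (r < m a)%N ->
    \sum_(0 <= p < (m a - r)%N) eta a (p + q)%N * ell a (p + r)%N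
      = (q == r)%:R.

Variables (F A : lmodType C).
(* F: space of g-valued fields on D;  B X Y = \int_D dx kappa(X(x), Y(x)) in A *)
Variables (J : Sigma -> nat -> F) (B : F -> F -> A) (eta : Sigma -> nat -> C).

Definition Gamma (w : C) : F :=
  \sum_(a : Sigma) \sum_(p < m a) ((w - zs a) ^+ p.+1)^-1 *: J a p.

Definition Qfun (w : C) : A := - ((2 * twist w)^-1 *: B (Gamma w) (Gamma w)).

Definition Dcharge (a : Sigma) (p : nat) : A :=
  2^-1 *: \sum_(q < m a) \sum_(r < m a | (p <= q + r)%N)
            eta a (q + r - p)%N *: B (J a q) (J a r).

Definition Qreg (w : C) : A :=
  Qfun w + \sum_(a : Sigma) \sum_(p < m a) ((w - zs a) ^+ p.+1)^-1 *: Dcharge a p.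

End Gaudin.

Definition regular_at (A : lmodType C) (dom : C -> Prop) (f : C -> A) (z0 : C)
  : Prop :=
  exists (n : nat) (coef : 'I_n -> A) (P : {poly C}),
    P.[z0] != 0 /\
    forall w : C, dom w -> P.[w] != 0 ->
      f w = (P.[w])^-1 *: \sum_(i < n) w ^+ i *: coef i.

(* Main.v *)
Require Import Defs.
From mathcomp Require Import all_boot all_order all_algebra.
From mathcomp Require Import complex Rstruct.
From mathcomp Require Import ring zify.
Set Implicit Arguments. Unset Strict Implicit. Unset Printing Implicit Defensive.
Import Order.TTheory GRing.Theory Num.Theory.
Local Open Scope ring_scope.

Section PolyF.
Variable V : lmodType C.

Definition polyF (f : C -> V) :=
  exists s : seq (nat * V), forall w, f w = \sum_(x <- s) w ^+ x.1 *: x.2.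

Lemma polyF_ext f g : (forall w, f w = g w) -> polyF f -> polyF g.
Proof. by move=> e [s Hs]; exists s => w; rewrite -e. Qed.

Lemma polyF0 : polyF (fun _ => 0).
Proof. by exists [::] => w; rewrite big_nil. Qed.

Lemma polyF_const v : polyF (fun _ => v).
Proof. by exists [:: (0%N, v)] => w; rewrite big_cons big_nil expr0 scale1r addr0. Qed.

Lemma polyF_add f g : polyF f -> polyF g -> polyF (fun w => f w + g w).
Proof.
move=> [s Hs] [t Ht]; exists (s ++ t) => w.
by rewrite big_cat Hs Ht.
Qed.

Lemma polyF_sum (I : Type) (r : seq I) (P : pred I) (f : I -> C -> V) :
  (forall i, P i -> polyF (f i)) -> polyF (fun w => \sum_(i <- r | P i) f i w).
Proof.
move=> H; elim: r => [|i r IH].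
  by apply: polyF_ext polyF0 => w; rewrite big_nil.
case Pi: (P i).
  apply: polyF_ext (polyF_add (H i Pi) IH) => w; by rewrite big_cons Pi.
by apply: polyF_ext IH => w; rewrite big_cons Pi.
Qed.

Lemma polyF_pscale (p : {poly C}) f : polyF f -> polyF (fun w => p.[w] *: f w).
Proof.
move=> [s Hs].
exists [seq (i1 + i2.1, p`_i1 *: i2.2)%N | i1 <- iota 0 (size p), i2 <- s] => w.
rewrite big_allpairs_dep horner_coef Hs scaler_suml -(big_mkord xpredT (fun i => (p`_i * w ^+ i) *: _)).
rewrite /index_iota subn0; apply: eq_bigr => i _.
rewrite scaler_sumr; apply: eq_bigr => x _ /=.
rewrite scalerA scalerA exprD; congr (_ *: _); ring.
Qed.

Lemma polyF_pconst (p : {poly C}) v : polyF (fun w => p.[w] *: v).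
Proof. exact: (polyF_pscale p (polyF_const v)). Qed.

Lemma polyF_opp f : polyF f -> polyF (fun w => - f w).
Proof.
move=> H; apply: polyF_ext (polyF_pscale (-1)%:P H) => w.
by rewrite hornerC scaleN1r.
Qed.

Lemma polyF_cscale c f : polyF f -> polyF (fun w => c *: f w).
Proof.
move=> H; apply: polyF_ext (polyF_pscale c%:P H) => w.
by rewrite hornerC.
Qed.
End PolyF.

Section PolyFlin.
Variables (V W : lmodType C) (L : V -> W).
Hypothesis HL : forall c x y, L (c *: x + y) = c *: L x + L y.

Lemma lin0 : L 0 = 0.
Proof.
have := HL 1 0 0; rewrite !scale1r addr0.
by move=> /(congr1 (fun x => x - L 0)); rewrite addrK subrr => <-.
Qed.

Lemma linZ c x : L (c *: x) = c *: L x.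
Proof. by have := HL c x 0; rewrite !addr0 lin0 addr0. Qed.

Lemma linD x y : L (x + y) = L x + L y.
Proof. by have := HL 1 x y; rewrite !scale1r. Qed.

Lemma lin_sum (I : Type) (r : seq I) (P : pred I) (F : I -> V) :
  L (\sum_(i <- r | P i) F i) = \sum_(i <- r | P i) L (F i).
Proof.
elim: r => [|i r IH]; first by rewrite !big_nil lin0.
by rewrite !big_cons; case: (P i); rewrite ?linD IH.
Qed.

Lemma polyF_lin f : polyF f -> polyF (fun w => L (f w)).
Proof.
move=> [s Hs]; exists [seq (x.1, L x.2) | x <- s] => w.
by rewrite Hs big_map lin_sum; apply: eq_bigr => x _; rewrite linZ.
Qed.
End PolyFlin.

Section Bil.
Variables (F A : lmodType C) (B : F -> F -> A).
Hypothesis HBsym : forall X Y, B X Y = B Y X.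
Hypothesis HBlin : forall (c : C) X Y W, B (c *: X + Y) W = c *: B X W + B Y W.

Lemma Blinl W : forall c x y, B (c *: x + y) W = c *: B x W + B y W.
Proof. by move=> *; apply: HBlin. Qed.
Lemma Blinr X : forall c x y, B X (c *: x + y) = c *: B X x + B X y.
Proof. by move=> c x y; rewrite !(HBsym X) HBlin. Qed.

Lemma polyF_B f g : polyF f -> polyF g -> polyF (fun w => B (f w) (g w)).
Proof.
move=> [s Hs] Hg.
have e : forall w, \sum_(x <- s) ('X^(x.1)).[w] *: B x.2 (g w) = B (f w) (g w).
  move=> w; rewrite Hs (lin_sum (Blinl (g w))); apply: eq_bigr => x _.
  by rewrite (linZ (Blinl (g w))) hornerXn.
apply: (polyF_ext e); apply: polyF_sum => x _.
exact: (polyF_pscale _ (polyF_lin (Blinr x.2) Hg)).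
Qed.
End Bil.

Section Reg.
Variable z0 : C.

Definition RegV (V : lmodType C) (f : C -> V) :=
  exists (P : {poly C}) (N : C -> V),
    [/\ P.[z0] != 0, polyF N & forall w, P.[w] != 0 -> f w = P.[w]^-1 *: N w].

Definition RegS (h : C -> C) :=
  exists P Q : {poly C}, P.[z0] != 0 /\ forall w, P.[w] != 0 -> h w = Q.[w] / P.[w].

Lemma RegV_ext (V : lmodType C) (f g : C -> V) : (forall w, f w = g w) -> RegV f -> RegV g.
Proof. by move=> e [P [N [H1 H2 H3]]]; exists P, N; split=> // w /H3; rewrite e. Qed.

Lemma RegV_poly (V : lmodType C) (f : C -> V) : polyF f -> RegV f.
Proof.
move=> H; exists 1, f; split; rewrite ?hornerC ?oner_eq0 //.
by move=> w _; rewrite hornerC invr1 scale1r.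
Qed.

Lemma RegV_add (V : lmodType C) (f g : C -> V) : RegV f -> RegV g -> RegV (fun w => f w + g w).
Proof.
move=> [P [N [P0 HN Hf]]] [Q [M [Q0 HM Hg]]].
exists (P * Q), (fun w => Q.[w] *: N w + P.[w] *: M w); split.
- by rewrite hornerM mulf_neq0.
- by apply: polyF_add; apply: polyF_pscale.
move=> w; rewrite hornerM mulf_eq0 negb_or => /andP[Pw Qw].
rewrite Hf // Hg // scalerDr !scalerA invfM.
by congr (_ *: _ + _ *: _); field; rewrite Pw Qw.
Qed.

Lemma RegV0 (V : lmodType C) : RegV (fun _ => 0 : V).
Proof. exact: RegV_poly (polyF0 V). Qed.

Lemma RegV_sum (V : lmodType C) (I : Type) (r : seq I) (P : pred I) (f : I -> C -> V) :
  (forall i, P i -> RegV (f i)) -> RegV (fun w => \sum_(i <- r | P i) f i w).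
Proof.
move=> H; elim: r => [|i r IH].
  by apply: RegV_ext (RegV0 V) => w; rewrite big_nil.
case Pi: (P i).
  apply: RegV_ext (RegV_add (H i Pi) IH) => w; by rewrite big_cons Pi.
by apply: RegV_ext IH => w; rewrite big_cons Pi.
Qed.

Lemma RegV_scale (V : lmodType C) h (f : C -> V) : RegS h -> RegV f -> RegV (fun w => h w *: f w).
Proof.
move=> [P [Q [P0 Hh]]] [P' [N [P'0 HN Hf]]].
exists (P * P'), (fun w => Q.[w] *: N w); split.
- by rewrite hornerM mulf_neq0.
- exact: polyF_pscale.
move=> w; rewrite hornerM mulf_eq0 negb_or => /andP[Pw Qw].
rewrite Hh // Hf // !scalerA invfM.
by congr (_ *: _); field; rewrite Pw Qw.
Qed.

Lemma RegV_B (F A : lmodType C) (B : F -> F -> A)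
  (HBsym : forall X Y, B X Y = B Y X)
  (HBlin : forall (c : C) X Y W, B (c *: X + Y) W = c *: B X W + B Y W) f g :
  RegV f -> RegV g -> RegV (fun w => B (f w) (g w)).
Proof.
move=> [P [N [P0 HN Hf]]] [Q [M [Q0 HM Hg]]].
exists (P * Q), (fun w => B (N w) (M w)); split.
- by rewrite hornerM mulf_neq0.
- exact: polyF_B.
move=> w; rewrite hornerM mulf_eq0 negb_or => /andP[Pw Qw].
rewrite Hf // Hg // (linZ (Blinl HBlin _)) (linZ (Blinr HBsym HBlin _)).
by rewrite scalerA invfM mulrC.
Qed.

Lemma RegS_poly (Q : {poly C}) : RegS (fun w => Q.[w]).
Proof.
exists 1, Q; split; rewrite ?hornerC ?oner_eq0 // => w _.
by rewrite hornerC divr1.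
Qed.

Lemma RegS_ext f g : (forall w, f w = g w) -> RegS f -> RegS g.
Proof. by move=> e [P [Q [H1 H3]]]; exists P, Q; split=> // w /H3; rewrite e. Qed.

Lemma RegS_add f g : RegS f -> RegS g -> RegS (fun w => f w + g w).
Proof.
move=> [P [N [P0 Hf]]] [Q [M [Q0 Hg]]].
exists (P * Q), (N * Q + M * P); split.
- by rewrite hornerM mulf_neq0.
move=> w; rewrite hornerM mulf_eq0 negb_or => /andP[Pw Qw].
rewrite Hf // Hg // hornerD !hornerM.
by field; rewrite Pw Qw.
Qed.

Lemma RegS_sum (I : Type) (r : seq I) (P : pred I) (f : I -> C -> C) :
  (forall i, P i -> RegS (f i)) -> RegS (fun w => \sum_(i <- r | P i) f i w).
Proof.
move=> H; elim: r => [|i r IH].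
  by apply: RegS_ext (RegS_poly 0) => w; rewrite big_nil hornerC.
case Pi: (P i).
  apply: RegS_ext (RegS_add (H i Pi) IH) => w; by rewrite big_cons Pi.
by apply: RegS_ext IH => w; rewrite big_cons Pi.
Qed.

Lemma RegS_inv h (L R : {poly C}) : RegS h -> L.[z0] != 0 -> R.[z0] = 0 ->
  RegS (fun w => (L.[w] + R.[w] * h w)^-1).
Proof.
move=> [P [Q [P0 Hh]]] L0 R0.
exists (P * (L * P + R * Q)), (P * P); split.
  by rewrite !(hornerM, hornerD) R0 mul0r addr0 !mulf_neq0.
move=> w; rewrite !(hornerM, hornerD) mulf_eq0 negb_or => /andP[Pw Dw].
rewrite Hh //.
have -> : L.[w] + R.[w] * (Q.[w] / P.[w]) = (L.[w] * P.[w] + R.[w] * Q.[w]) / P.[w].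
  by field.
by field; rewrite Pw Dw.
Qed.
End Reg.

Lemma sum_rev_delta (m j : nat) (f : nat -> C) :
  \sum_(i < m) f i * (j == (m.-1 - i)%N)%:R = if (j < m)%N then f (m.-1 - j)%N else 0.
Proof.
case: ltnP => jm.
  have im : (m.-1 - j < m)%N by lia.
  rewrite (bigD1 (Ordinal im)) //= big1 ?addr0.
    have -> : j == (m.-1 - (m.-1 - j))%N by apply/eqP; lia.
    by rewrite mulr1.
  move=> i /eqP ne; case: eqP => [e|]; last by rewrite mulr0.
  by exfalso; apply: ne; apply: val_inj => /=; have := ltn_ord i; lia.
rewrite big1 // => i _; case: eqP => [e|]; last by rewrite mulr0.
by exfalso; have := ltn_ord i; lia.
Qed.

Section Heart.
Variables (m : nat) (l e : nat -> C).
Hypothesis Hspec : forall q r, (q < m)%N -> (r < m)%N ->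
    \sum_(0 <= p < (m - r)%N) e (p + q)%N * l (p + r)%N = (q == r)%:R.
Hypothesis Htop : l m.-1 != 0.
Hypothesis Hm : (0 < m)%N.

Lemma e_low j : (j < m.-1)%N -> e j = 0.
Proof.
move=> jm; have := Hspec (q := j) (r := m.-1); rewrite (_ : (m - m.-1 = 1)%N); last by lia.
rewrite big_nat1 add0n => /(_ ltac:(lia) ltac:(lia)).
have -> : (j == m.-1) = false by apply/eqP; lia.
by move/eqP; rewrite mulf_eq0 (negbTE Htop) orbF => /eqP.
Qed.

Definition Lpoly : {poly C} := \sum_(i < m) l i *: 'X^(m.-1 - i).
Definition Cpoly (s : nat) : {poly C} :=
  \sum_(p < m) (if (p <= s)%N then e (s - p)%N else 0) *: 'X^(m.-1 - p).
Definition Tpoly (q r : nat) : {poly C} :=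
  Lpoly * Cpoly (q + r) - 'X^(m.-1 - q + (m.-1 - r)).

Lemma coefL j : Lpoly`_j = if (j < m)%N then l (m.-1 - j)%N else 0.
Proof.
rewrite /Lpoly coef_sum -(sum_rev_delta m j l); apply: eq_bigr => i _.
by rewrite coefZ coefXn.
Qed.

Lemma coefCp s k : (Cpoly s)`_k =
  if (k < m)%N then (if (m.-1 - k <= s)%N then e (s - (m.-1 - k))%N else 0) else 0.
Proof.
rewrite /Cpoly coef_sum -(sum_rev_delta m k (fun p => if (p <= s)%N then e (s - p)%N else 0)).
by apply: eq_bigr => i _; rewrite coefZ coefXn.
Qed.

Lemma take_T q r : (q < m)%N -> (r < m)%N -> take_poly m (Tpoly q r) = 0.
Proof.
move=> qm rm; apply/polyP => n; rewrite coef_take_poly coef0.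
case: ltnP => nm //.
rewrite /Tpoly coefB coefXn coefM.
set s := (q + r)%N.
have -> : \sum_(j < n.+1) Lpoly`_j * (Cpoly s)`_(n - j) =
          \sum_(0 <= j < n.+1) l (m.-1 - j)%N *
            (if (m.-1 - (n - j) <= s)%N then e (s - (m.-1 - (n - j)))%N else 0).
  rewrite big_mkord; apply: eq_bigr => j _.
  have := ltn_ord j => jn.
  rewrite coefL coefCp.
  have -> : (j < m)%N by lia.
  by have -> : (n - j < m)%N by lia.
case: (ltnP s m.-1) => sm.
  rewrite big1_seq; last first.
    move=> j _; case: ifP => _; last by rewrite mulr0.
    by rewrite e_low ?mulr0 //; lia.
  have -> : (n == (m.-1 - q + (m.-1 - r))%N) = false by apply/eqP; lia.
  by rewrite subrr.
rewrite big_nat_rev /=.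
have -> : \sum_(0 <= i < n.+1) l (m.-1 - (0 + n.+1 - i.+1))%N *
     (if (m.-1 - (n - (0 + n.+1 - i.+1)) <= s)%N
      then e (s - (m.-1 - (n - (0 + n.+1 - i.+1))))%N else 0) =
   \sum_(0 <= p < (m - (m.-1 - n))%N) e (p + (s - m.-1))%N * l (p + (m.-1 - n))%N.
  have -> : (m - (m.-1 - n))%N = n.+1 by lia.
  apply: eq_big_nat => i /andP[_ ilt].
  rewrite ifT; last by lia.
  rewrite mulrC; congr (e _ * l _); lia.
rewrite Hspec; [|lia|lia].
have -> : (s - m.-1 == m.-1 - n)%N = (n == (m.-1 - q + (m.-1 - r))%N).
  by apply/eqP/eqP; lia.
by rewrite subrr.
Qed.

Lemma T_factor q r : (q < m)%N -> (r < m)%N ->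
  Tpoly q r = drop_poly m (Tpoly q r) * 'X^m.
Proof.
move=> qm rm; by rewrite -{1}(poly_take_drop m (Tpoly q r)) take_T // add0r.
Qed.
End Heart.

Lemma seq_ord (V : lmodType C) (s : seq (nat * V)) :
  exists n (coef : 'I_n -> V), forall w,
    \sum_(x <- s) w ^+ x.1 *: x.2 = \sum_(i < n) w ^+ i *: coef i.
Proof.
exists (\max_(x <- s) x.1.+1)%N, (fun i => \sum_(x <- s | x.1 == i :> nat) x.2) => w.
set n := (\max_(x <- s) x.1.+1)%N.
have -> : \sum_(i < n) w ^+ i *: \sum_(x <- s | x.1 == i :> nat) x.2 =
   \sum_(i < n) \sum_(x <- s) (if x.1 == i :> nat then w ^+ x.1 *: x.2 else 0).
  apply: eq_bigr => i _; rewrite scaler_sumr big_mkcond; apply: eq_bigr => x _.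
  by case: eqP => [->|]; rewrite ?scaler0.
rewrite exchange_big; apply: eq_big_seq => x xs /=.
rewrite -big_mkcond /=.
under eq_bigl do rewrite eq_sym.
rewrite (big_ord1_eq _ (fun _ => w ^+ x.1 *: x.2)).
suff -> : (x.1 < n)%N by [].
exact: (@leq_bigmax_seq _ s xpredT (fun x => x.1.+1) x xs isT).
Qed.

Lemma RegV_regular (A : lmodType C) (dom : C -> Prop) (f g : C -> A) z0 :
  RegV z0 g -> (forall w, dom w -> f w = g w) -> regular_at dom f z0.
Proof.
move=> [P [N [P0 [s Hs] Hg]]] e.
have [n [coef Hc]] := seq_ord s.
exists n, coef, P; split=> // w dw Pw.
by rewrite e // Hg // Hs Hc.
Qed.

Lemma pow_split (x : C) (m p : nat) : (p < m)%N -> x != 0 ->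
  (x ^+ p.+1)^-1 = (x ^+ m)^-1 * x ^+ (m.-1 - p).
Proof.
move=> pm x0; have -> : m = ((m.-1 - p) + p.+1)%N by lia.
rewrite exprD invfM; have -> : ((m.-1 - p + p.+1).-1 - p = m.-1 - p)%N by lia.
by field; rewrite !expf_neq0.
Qed.

Lemma RegS_invpow (z0 z : C) (p : nat) (c : C) : z0 != z ->
  RegS z0 (fun w => c / (w - z) ^+ p.+1).
Proof.
move=> ne; exists (('X - z%:P) ^+ p.+1), c%:P; split.
  by rewrite horner_exp hornerXsubC expf_neq0 // subr_eq0.
by move=> w _; rewrite horner_exp hornerXsubC hornerC.
Qed.

Lemma RegS_const z0 (c : C) : RegS z0 (fun _ => c).
Proof. by apply: RegS_ext (RegS_poly z0 c%:P) => w; rewrite hornerC. Qed.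
Lemma main_alg (V : lmodType C) (Dp E X2 X3 : V) (c M Lz phio : C) :
  c != 0 -> M = Lz + c * phio -> M != 0 ->
  - (((2 * (c^-1 * M))^-1 * (c^-1 * c^-1)) *: 
      (((2 * Lz) *: Dp - c *: E) + c *: X2 + c *: (X2 + c *: X3))) + c^-1 *: Dp
  = (2 * M)^-1 *: (E - 2 *: X2 - c *: X3 + (2 * phio) *: Dp).
Proof.
move=> c0 eM M0.
pose g (a b x d : C) := a *: Dp + b *: E + x *: X2 + d *: X3.
have gD : forall a b x d a' b' x' d',
  g a b x d + g a' b' x' d' = g (a + a') (b + b') (x + x') (d + d').
  move=> *; rewrite /g !scalerDl [LHS]addrACA; congr (_ + _).
  rewrite [LHS]addrACA; congr (_ + _); by rewrite [LHS]addrACA.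
have gZ : forall s a b x d, s *: g a b x d = g (s * a) (s * b) (s * x) (s * d).
  by move=> *; rewrite /g !scalerDr !scalerA.
have gN : forall a b x d, - g a b x d = g (- a) (- b) (- x) (- d).
  by move=> *; rewrite -scaleN1r gZ !mulN1r.
have eDp : Dp = g 1 0 0 0 by rewrite /g !scale0r !addr0 scale1r.
have eE : E = g 0 1 0 0 by rewrite /g !scale0r add0r !addr0 scale1r.
have eX2 : X2 = g 0 0 1 0 by rewrite /g !scale0r !add0r addr0 scale1r.
have eX3 : X3 = g 0 0 0 1 by rewrite /g !scale0r !add0r scale1r.
rewrite [in LHS]eDp [in LHS]eE [in LHS]eX2 [in LHS]eX3.
rewrite [in RHS]eDp [in RHS]eE [in RHS]eX2 [in RHS]eX3.
do 6! rewrite ?gZ ?gN ?gD.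
rewrite eM in M0 *.
by congr g; field; rewrite c0 M0.
Qed.

Unset Implicit Arguments.
Theorem propositionA3
  (Sigma : finType) (bar : Sigma -> Sigma)
  (m : Sigma -> nat) (ell : Sigma -> nat -> C) (zs : Sigma -> C) (ellinf : C)
  (F A : lmodType C) (J : Sigma -> nat -> F) (B : F -> F -> A)
  (eta : Sigma -> nat -> C)
  (Hbar : forall a, bar (bar a) = a)
  (Hm_pos : forall a, (0 < m a)%N)
  (Hm_bar : forall a, m (bar a) = m a)
  (Hell_bar : forall a p, ell (bar a) p = (ell a p)^*)
  (Hell_top : forall a, ell a (m a).-1 != 0)
  (Hz_bar : forall a, zs (bar a) = (zs a)^*)
  (Hz_inj : injective zs)
  (Hellinf_real : ellinf^* = ellinf) (Hellinf : ellinf != 0)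
  (HBsym : forall X Y, B X Y = B Y X)
  (HBlin : forall (c : C) X Y W, B (c *: X + Y) W = c *: B X W + B Y W)
  (Heta : eta_spec m ell eta) :
  forall a0 : Sigma,
    regular_at (fun w => off_sites zs w /\ twist m ell zs ellinf w != 0)
      (Qreg m ell zs ellinf J B eta) (zs a0).
Proof.
move=> a0.
set z0 := zs a0; set m0 := m a0; set l := ell a0; set e := eta a0.
have ne0 : forall a, a != a0 -> z0 != zs a.
  by move=> a /eqP na; apply/eqP => /Hz_inj eq; apply: na; rewrite eq.
pose DC a p := Dcharge m J B eta a p.
pose Bl := Blinl HBlin. pose Br := Blinr HBsym HBlin.
pose U w := \sum_(q < m0) (w - z0) ^+ (m0.-1 - q) *: J a0 q.
pose Dp w := \sum_(p < m0) (w - z0) ^+ (m0.-1 - p) *: DC a0 p.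
pose Lz w := (Lpoly m0 l).[w - z0].
pose Go w := \sum_(a | a != a0) \sum_(p < m a) ((w - zs a) ^+ p.+1)^-1 *: J a p.
pose Do w := \sum_(a | a != a0) \sum_(p < m a) ((w - zs a) ^+ p.+1)^-1 *: DC a p.
pose phio w := \sum_(a | a != a0) \sum_(p < m a) ell a p / (w - zs a) ^+ p.+1 - ellinf.
pose M w := Lz w + (w - z0) ^+ m0 * phio w.
pose E w := \sum_(q < m0) \sum_(r < m0)
   (drop_poly m0 (Tpoly m0 l e q r)).[w - z0] *: B (J a0 q) (J a0 r).
have F1 : forall w, w - z0 != 0 ->
  Gamma m zs J w = ((w - z0) ^+ m0)^-1 *: (U w + (w - z0) ^+ m0 *: Go w).
  move=> w wz; rewrite /Gamma (bigD1 a0) //= scalerDr scalerA mulVf ?expf_neq0 // scale1r.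
  congr (_ + _); rewrite /U scaler_sumr; apply: eq_bigr => p _.
  by rewrite scalerA -pow_split.
have F2 : forall w, w - z0 != 0 -> twist m ell zs ellinf w = ((w - z0) ^+ m0)^-1 * M w.
  move=> w wz; rewrite /twist (bigD1 a0) //= /M mulrDr mulrA mulVf ?expf_neq0 // mul1r /phio.
  rewrite addrA; congr (_ + _ - _).
  rewrite /Lz /Lpoly horner_sum mulr_sumr; apply: eq_bigr => p _.
  by rewrite hornerZ hornerXn (@pow_split _ m0) // /l; ring.
have F3 : forall w, w - z0 != 0 ->
  \sum_(a : Sigma) \sum_(p < m a) ((w - zs a) ^+ p.+1)^-1 *: DC a p
   = ((w - z0) ^+ m0)^-1 *: Dp w + Do w.
  move=> w wz; rewrite (bigD1 a0) //=; congr (_ + _).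
  rewrite /Dp scaler_sumr; apply: eq_bigr => p _.
  by rewrite [in RHS]scalerA -(@pow_split _ m0).
have F4 : forall w, (2 * Lz w) *: Dp w - B (U w) (U w) = (w - z0) ^+ m0 *: E w.
  move=> w.
  have HUU : B (U w) (U w) = \sum_(q < m0) \sum_(r < m0)
     ((w - z0) ^+ (m0.-1 - q) * (w - z0) ^+ (m0.-1 - r)) *: B (J a0 q) (J a0 r).
    rewrite /U (lin_sum (Bl _)); apply: eq_bigr => q _.
    rewrite (linZ (Bl _)) (lin_sum (Br _)) scaler_sumr; apply: eq_bigr => r _.
    by rewrite (linZ (Br _)) scalerA.
  have HD : Dp w = 2^-1 *: \sum_(q < m0) \sum_(r < m0)
     (Cpoly m0 e (q + r)).[w - z0] *: B (J a0 q) (J a0 r).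
    rewrite /Dp /DC /Dcharge.
    under eq_bigr do rewrite scalerA mulrC -scalerA.
    rewrite -scaler_sumr; congr (_ *: _).
    under eq_bigr do rewrite scaler_sumr.
    rewrite exchange_big; apply: eq_bigr => q _.
    under eq_bigr do rewrite scaler_sumr big_mkcond.
    rewrite exchange_big; apply: eq_bigr => r _.
    rewrite /Cpoly horner_sum scaler_suml; apply: eq_bigr => p _.
    rewrite hornerZ hornerXn; case: ifP => _.
      by rewrite scalerA mulrC.
    by rewrite mul0r scale0r.
  rewrite HD HUU scalerA mulrAC mulfV ?pnatr_eq0 // mul1r.
  rewrite scaler_sumr -sumrB /E scaler_sumr; apply: eq_bigr => q _.
  rewrite scaler_sumr -sumrB scaler_sumr; apply: eq_bigr => r _.
  have := T_factor (Heta a0) (Hell_top a0) (Hm_pos a0) (ltn_ord q) (ltn_ord r).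
  rewrite -/m0 -/l -/e => Tf.
  have ET : (Tpoly m0 l e q r).[w - z0] =
      (drop_poly m0 (Tpoly m0 l e q r)).[w - z0] * (w - z0) ^+ m0.
    by rewrite {1}Tf hornerM hornerXn.
  have ET2 : (Tpoly m0 l e q r).[w - z0] = Lz w * (Cpoly m0 e (q + r)).[w - z0]
      - (w - z0) ^+ (m0.-1 - q) * (w - z0) ^+ (m0.-1 - r).
    by rewrite /Tpoly hornerD hornerN hornerM hornerXn exprD.
  by rewrite scalerA -scalerBl -ET2 ET scalerA mulrC.
have Main : forall w, w - z0 != 0 -> M w != 0 ->
  Qreg m ell zs ellinf J B eta w =
  (2 * M w)^-1 *: (E w - 2 *: B (U w) (Go w) - (w - z0) ^+ m0 *: B (Go w) (Go w)
                   + (2 * phio w) *: Dp w) + Do w.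
  move=> w wz Mw.
  rewrite /Qreg F3 // /Qfun F1 // F2 // addrA; congr (_ + _).
  rewrite (linZ (Bl _)) (linZ (Br _)) scalerA.
  rewrite (linD (Bl _)) (linZ (Bl _)) (linD (Br _)) (linZ (Br _)) (linD (Br _)) (linZ (Br _)).
  rewrite (HBsym (Go w) (U w)).
  have eUU : B (U w) (U w) = (2 * Lz w) *: Dp w - (w - z0) ^+ m0 *: E w.
    by rewrite -F4 subKr.
  rewrite eUU scalerA.
  apply: main_alg => //; by rewrite expf_neq0.
have RGo : RegV z0 Go.
  apply: RegV_sum => a na; apply: RegV_sum => p _.
  apply: RegV_scale; last exact: RegV_poly (polyF_const _).
  by apply: RegS_ext (RegS_invpow p 1 (ne0 a na)) => w; rewrite div1r.
have RDo : RegV z0 Do.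
  apply: RegV_sum => a na; apply: RegV_sum => p _.
  apply: RegV_scale; last exact: RegV_poly (polyF_const _).
  by apply: RegS_ext (RegS_invpow p 1 (ne0 a na)) => w; rewrite div1r.
have Rphio : RegS z0 phio.
  apply: RegS_add; last exact: RegS_const.
  apply: RegS_sum => a na; apply: RegS_sum => p _.
  exact: (RegS_invpow p (ell a p) (ne0 a na)).
have PU : polyF U.
  apply: polyF_sum => q _.
  apply: polyF_ext (polyF_pconst (('X - z0%:P) ^+ (m0.-1 - q)) (J a0 q)) => w.
  by rewrite horner_exp hornerXsubC.
have PDp : polyF Dp.
  apply: polyF_sum => q _.
  apply: polyF_ext (polyF_pconst (('X - z0%:P) ^+ (m0.-1 - q)) (DC a0 q)) => w.
  by rewrite horner_exp hornerXsubC.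
have PE : polyF E.
  apply: polyF_sum => q _; apply: polyF_sum => r _.
  apply: polyF_ext (polyF_pconst (drop_poly m0 (Tpoly m0 l e q r) \Po ('X - z0%:P)) _) => w.
  by rewrite horner_comp hornerXsubC.
have RM : RegS z0 (fun w => (2 * M w)^-1).
  apply: RegS_ext (@RegS_inv z0 phio (2%:P * (Lpoly m0 l \Po ('X - z0%:P)))
                            (2%:P * ('X - z0%:P) ^+ m0) Rphio _ _) => [w||].
  - rewrite !hornerM !hornerC horner_comp horner_exp hornerXsubC /M /Lz.
    by congr (_^-1); ring.
  - rewrite hornerM hornerC horner_comp hornerXsubC subrr horner_coef0 coefL.
    by rewrite ifT ?Hm_pos // mulf_neq0 ?pnatr_eq0 // subn0; apply: Hell_top.
  - by rewrite hornerM horner_exp hornerXsubC subrr expr0n eqn0Ngt Hm_pos mulr0.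
apply: (RegV_regular (g := fun w => (2 * M w)^-1 *: (E w - 2 *: B (U w) (Go w)
     - (w - z0) ^+ m0 *: B (Go w) (Go w) + (2 * phio w) *: Dp w) + Do w)); last first.
  move=> w [offw tw]; apply: Main.
    by rewrite subr_eq0; apply: offw.
  by apply: contra tw; rewrite F2 ?subr_eq0 ?offw // => /eqP ->; rewrite mulr0.
apply: RegV_add => //; apply: RegV_scale => //.
apply: RegV_add; last first.
  apply: RegV_scale; last exact: RegV_poly.
  by apply: RegS_ext (RegS_add Rphio Rphio) => w; ring.
have RU := RegV_poly z0 PU.
apply: RegV_add.
  apply: RegV_add. exact: (RegV_poly z0 PE).
  apply: RegV_ext (RegV_scale (RegS_const z0 (-2)) (RegV_B HBsym HBlin RU RGo)) => w.
  by rewrite scaleNr.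
apply: RegV_ext (RegV_scale (RegS_poly z0 (- ('X - z0%:P) ^+ m0)) (RegV_B HBsym HBlin RGo RGo)) => w.
by rewrite hornerN horner_exp hornerXsubC scaleNr.
Qed.
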